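(* Let $F$ be an algebraically closed field of characteristic zero and let $A$, $B$ be finite dimensional algebras with Wedderburn–Malcev decompositions $A\cong A_1\times\cdots\times A_q\oplus J(A)$ and $B\cong B_1\times\cdots\times B_r\oplus J(B)$ ($A_i,B_j$ simple). Suppose $A_1\times\cdots\times A_k\cong B_1\times\cdots\times B_k\cong U$. Then $A\times B$ is PI-equivalent to an algebra $C$ which, as a vector space, is $C=U\times A_{k+1}\times\cdots\times A_q\times B_{k+1}\times\cdots\times B_r\oplus J(A)\oplus J(B)$; namely $C$ is the subalgebra of $A\times B$ consisting of all pairs $(u+a+j_A,\ \varphi(u)+b+j_B)$ with $u\in A_1\times\cdots\times A_k$, $a\in A_{k+1}\times\cdots\times A_q$, $j_A\in J(A)$, $b\in B_{k+1}\times\cdots\times B_r$, $j_B\in J(B)$, where $\varphi:A_1\times\cdots\times A_k\to B_1\times\cdots\times B_k$ is a fixed isomorphism.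
   Context: PI-equivalent means having the same $T$-ideal of polynomial identities. $J(\cdot)$ denotes the Jacobson radical. *)

(* Defs.v *)
From HB Require Import structures.
From mathcomp Require Import all_boot all_order all_algebra.
Set Implicit Arguments.
Unset Strict Implicit.
Unset Printing Implicit Defensive.
Import GRing.Theory.
Local Open Scope ring_scope.

Record nalg (F : fieldType) := NAlg {
  nalg_car :> vectType F;
  nmul : nalg_car -> nalg_car -> nalg_car;
  nmulA : forall x y z, nmul x (nmul y z) = nmul (nmul x y) z;
  nmulDl : forall x y z, nmul (x + y) z = nmul x z + nmul y z;
  nmulDr : forall x y z, nmul x (y + z) = nmul x y + nmul x z;
  nmulZl : forall (a : F) x y, nmul (a *: x) y = a *: nmul x y;
  nmulZr : forall (a : F) x y, nmul x (a *: y) = a *: nmul x y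
}.
Arguments nmul {F A} x y : rename.

Section Product.
Variables (F : fieldType) (A B : nalg F).
Definition pmul (x y : (A * B)%type) : (A * B)%type :=
  (nmul x.1 y.1, nmul x.2 y.2).
Fact pmulA x y z : pmul x (pmul y z) = pmul (pmul x y) z.
Proof. by rewrite /pmul /= !nmulA. Qed.
Fact pmulDl x y z : pmul (x + y) z = pmul x z + pmul y z.
Proof. by rewrite /pmul /= !nmulDl. Qed.
Fact pmulDr x y z : pmul x (y + z) = pmul x y + pmul x z.
Proof. by rewrite /pmul /= !nmulDr. Qed.
Fact pmulZl (a : F) x y : pmul (a *: x) y = a *: pmul x y.
Proof. by rewrite /pmul /= !nmulZl. Qed.
Fact pmulZr (a : F) x y : pmul x (a *: y) = a *: pmul x y.
Proof. by rewrite /pmul /= !nmulZr. Qed.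
Definition prod_nalg : nalg F :=
  @NAlg F (A * B)%type pmul pmulA pmulDl pmulDr pmulZl pmulZr.
End Product.

(* Noncommutative polynomials without constant term (elements of the free
   non-unital algebra F<X>, X = {x_0, x_1, ...}), as finite formal sums of
   monomials c * x_i * x_{w_1} * ... * x_{w_m}. *)
Definition ncpoly (F : fieldType) := seq (F * (nat * seq nat)).

Section Eval.
Variables (F : fieldType) (A : nalg F).
Definition weval (e : nat -> A) (i : nat) (w : seq nat) : A :=
  foldl (fun acc j => nmul acc (e j)) (e i) w.
Definition peval (e : nat -> A) (f : ncpoly F) : A :=
  \sum_(m <- f) m.1 *: weval e m.2.1 m.2.2.

Definition is_PI (f : ncpoly F) : Prop := forall e : nat -> A, peval e f = 0.
(* f vanishes on all evaluations in the subset P of A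
   (= f is an identity of the subalgebra P, when P is one) *)
Definition is_PI_on (P : A -> Prop) (f : ncpoly F) : Prop :=
  forall e : nat -> A, (forall i, P (e i)) -> peval e f = 0.

(* Jacobson radical of a (possibly non-unital) algebra: a is in J(A) iff
   1 - r a is left invertible in the unitalization A^# = F + A for every
   r = l + r' in A^#, i.e. l a + r' a is left quasi-regular. *)
Definition lqr (y : A) : Prop := exists z : A, z + y - nmul z y = 0.
Definition in_jacobson (a : A) : Prop :=
  forall (l : F) (r : A), lqr (l *: a + nmul r a).

Definition subalg (S : {vspace A}) : Prop :=
  forall x y, x \in S -> y \in S -> nmul x y \in S.

Definition simple_subalg (S : {vspace A}) : Prop :=
  [/\ subalg S,
      exists x y, [/\ x \in S, y \in S & nmul x y != 0]
    & forall I : {vspace A}, (I <= S)%VS ->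
        (forall x y, x \in S -> y \in I -> nmul x y \in I /\ nmul y x \in I) ->
        I = 0%VS \/ I = S].

Definition WM_decomp (q : nat) (As : 'I_q -> {vspace A}) (J : {vspace A}) : Prop :=
  [/\ forall i, simple_subalg (As i),
      forall i j, i != j -> forall x y, x \in As i -> y \in As j -> nmul x y = 0,
      forall x, x \in J <-> in_jacobson x,
      (\sum_(i < q) As i + J)%VS = fullv
    & directv (\sum_(i < q) As i + J)].
End Eval.

(* Main.v *)
Require Import Defs.
From HB Require Import structures.
From mathcomp Require Import all_boot all_order all_algebra.
From Stdlib Require Import FunctionalExtensionality ClassicalEpsilon.
Import GRing.Theory.
Local Open Scope ring_scope.


Section Helpers.
Variables (F : fieldType) (A : nalg F).

Lemma nmul0l (y : A) : nmul 0 y = 0.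
Proof. by have := nmulZl 0 0 y; rewrite !scale0r. Qed.
Lemma nmul0r (y : A) : nmul y 0 = 0.
Proof. by have := nmulZr 0 y 0; rewrite !scale0r. Qed.
Lemma nmulNl (x y : A) : nmul (- x) y = - nmul x y.
Proof. by rewrite -scaleN1r nmulZl scaleN1r. Qed.
Lemma nmulNr (x y : A) : nmul x (- y) = - nmul x y.
Proof. by rewrite -scaleN1r nmulZr scaleN1r. Qed.
Lemma nmulBl (x y z : A) : nmul (x - y) z = nmul x z - nmul y z.
Proof. by rewrite nmulDl nmulNl. Qed.
Lemma nmulBr (x y z : A) : nmul z (x - y) = nmul z x - nmul z y.
Proof. by rewrite nmulDr nmulNr. Qed.
Lemma nmul_suml I (s : seq I) (P : pred I) (f : I -> A) y :
  nmul (\sum_(i <- s | P i) f i) y = \sum_(i <- s | P i) nmul (f i) y.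
Proof. by elim/big_rec2: _ => [|i a b _ <-]; rewrite ?nmul0l ?nmulDl. Qed.
Lemma nmul_sumr I (s : seq I) (P : pred I) (f : I -> A) y :
  nmul y (\sum_(i <- s | P i) f i) = \sum_(i <- s | P i) nmul y (f i).
Proof. by elim/big_rec2: _ => [|i a b _ <-]; rewrite ?nmul0r ?nmulDr. Qed.

Variables (n : nat) (As : 'I_n -> {vspace A}).
Hypothesis hsub : forall i, subalg (As i).
Hypothesis horth : forall i j, i != j -> forall x y, x \in As i -> y \in As j -> nmul x y = 0.

Lemma sum_cross (P Q : pred 'I_n) x y :
  (forall i, P i -> ~~ Q i) ->
  x \in (\sum_(i | P i) As i)%VS -> y \in (\sum_(i | Q i) As i)%VS -> nmul x y = 0.
Proof.
move=> hPQ /memv_sumP[v hv ->] /memv_sumP[w hw ->].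
rewrite nmul_suml big1 // => i Pi; rewrite nmul_sumr big1 // => j Qj.
have ne : i != j by apply: contraNneq (hPQ i Pi) => ->.
exact: horth _ _ ne _ _ (hv i Pi) (hw j Qj).
Qed.

Lemma sum_closed (P : pred 'I_n) x y :
  x \in (\sum_(i | P i) As i)%VS -> y \in (\sum_(i | P i) As i)%VS ->
  nmul x y \in (\sum_(i | P i) As i)%VS.
Proof.
move=> /memv_sumP[v hv ->] /memv_sumP[w hw ->].
rewrite nmul_suml; apply: memv_suml => i Pi; rewrite nmul_sumr.
apply: memv_suml => j Pj.
have [<-|ne] := eqVneq i j.
  apply: (subvP (sumv_sup i Pi (subvv _))).
  by have hs := hsub i; rewrite /subalg in hs; apply: hs; [apply: hv|apply: hw].
by rewrite (horth _ _ ne _ _ (hv i Pi) (hw j Pj)) mem0v.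
Qed.
End Helpers.


Section Jac.
Variables (F : fieldType) (A : nalg F) (J : {vspace A}).
Hypothesis hJ : forall x, x \in J <-> in_jacobson x.

Lemma J_mull (x j : A) : j \in J -> nmul x j \in J.
Proof.
move=> /hJ hj; apply/hJ => l r.
have := hj 0 (l *: x + nmul r x).
by rewrite scale0r add0r nmulDl nmulZl nmulA.
Qed.

Lemma lqr_swap (x w : A) : lqr (nmul x w) -> lqr (nmul w x).
Proof.
move=> [z0 hz0]; exists (- nmul w x + nmul (nmul w z0) x).
have : nmul (nmul w (z0 + nmul x w - nmul z0 (nmul x w))) x = 0.
  by rewrite hz0 nmul0r nmul0l.
rewrite !nmulDl !nmulNl !nmulDr !nmulNr !nmulDl !nmulNl -!nmulA => <-.
rewrite opprD opprK.
by rewrite (addrC (- nmul w x)) subrK addrA.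
Qed.

Lemma J_mulr (x j : A) : j \in J -> nmul j x \in J.
Proof.
move=> hj; apply/hJ => l r.
have hw : l *: j + nmul r j \in J by rewrite memvD ?memvZ ?J_mull.
have -> : l *: nmul j x + nmul r (nmul j x) = nmul (l *: j + nmul r j) x.
  by rewrite nmulDl nmulZl nmulA.
apply: lqr_swap; have := (proj1 (hJ _) hw) 0 x.
by rewrite scale0r add0r.
Qed.
End Jac.


Section PE.
Variables (F : fieldType) (A B : nalg F).

Lemma foldl_pair (e : nat -> prod_nalg A B) (w : seq nat) (acc : prod_nalg A B) :
  foldl (fun acc j => nmul acc (e j)) acc w =
  (foldl (fun acc j => nmul acc (e j).1) acc.1 w,
   foldl (fun acc j => nmul acc (e j).2) acc.2 w).
Proof. by elim: w acc => [|j w IH] acc /=; [case: acc | rewrite IH]. Qed.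

Lemma peval_pair (e : nat -> prod_nalg A B) (f : ncpoly F) :
  peval e f = (peval (fun i => (e i).1) f, peval (fun i => (e i).2) f).
Proof.
rewrite /peval; elim: f => [|m f IH]; first by rewrite !big_nil.
rewrite !big_cons IH /weval foldl_pair /=.
done.
Qed.
End PE.


Lemma sum_split (F : fieldType) (V : vectType F) n k (Vs : 'I_n -> {vspace V}) :
  (\sum_(i < n) Vs i)%VS =
  (\sum_(i < n | (i < k)%N) Vs i + \sum_(i < n | (k <= i)%N) Vs i)%VS.
Proof.
rewrite (bigID (fun i : 'I_n => (i < k)%N)) /=; congr (_ + _)%VS.
by apply: eq_bigl => i; rewrite -leqNgt.
Qed.

Lemma addKsub (V : zmodType) (p s : V) : p + (s - p) = s.
Proof. by rewrite addrC subrK. Qed.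

Lemma Jpart (F : fieldType) (A : nalg F) (J : {vspace A})
  (hJ : forall x, x \in J <-> in_jacobson x) (x1 x2 y1 y2 j j2 : A) :
  nmul x1 y2 = 0 -> nmul y1 x2 = 0 -> j \in J -> j2 \in J ->
  nmul (x1 + y1 + j) (x2 + y2 + j2) - (nmul x1 x2 + nmul y1 y2) \in J.
Proof.
move=> h1 h2 hj hj2.
have -> : nmul (x1 + y1 + j) (x2 + y2 + j2) =
   (nmul (x1 + y1) j2 + nmul j (x2 + y2 + j2)) + (nmul x1 x2 + nmul y1 y2).
  rewrite nmulDl (nmulDr (x1 + y1)) !nmulDl !nmulDr h1 h2 addr0 add0r.
  by rewrite -addrA addrC.
rewrite addrK; apply: memvD; first exact: J_mull _ _ _ hJ _ _ hj2.
exact: J_mulr _ _ _ hJ _ _ hj.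
Qed.


Theorem lemma2p8 (F : closedFieldType) (hF : [pchar F] =i pred0)
  (A B : nalg F) (q r k : nat) (hkq : (k <= q)%N) (hkr : (k <= r)%N)
  (As : 'I_q -> {vspace A}) (JA : {vspace A})
  (Bs : 'I_r -> {vspace B}) (JB : {vspace B})
  (hA : WM_decomp As JA) (hB : WM_decomp Bs JB)
  (phi : 'Hom(A, B))
  (hphi_img : (phi @: (\sum_(i < q | (i < k)%N) As i))%VS
                = (\sum_(j < r | (j < k)%N) Bs j)%VS)
  (hphi_inj : {in (\sum_(i < q | (i < k)%N) As i)%VS &, injective phi})
  (hphi_mul : {in (\sum_(i < q | (i < k)%N) As i)%VS &,
                 forall x y, phi (nmul x y) = nmul (phi x) (phi y)}) :
  let inC : prod_nalg A B -> Prop := fun z =>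
    exists u a j b j',
      [/\ u \in (\sum_(i < q | (i < k)%N) As i)%VS /\
          a \in (\sum_(i < q | (k <= i)%N) As i)%VS,
          j \in JA,
          b \in (\sum_(i < r | (k <= i)%N) Bs i)%VS,
          j' \in JB
        & z = (u + a + j, phi u + b + j')] in
  (forall x y, inC x -> inC y -> inC (nmul x y)) /\
  (forall f : ncpoly F, is_PI (prod_nalg A B) f <-> is_PI_on inC f).
Proof.
move=> inC.
case: hA => hAs0 hAo hAJ hAf _; case: hB => hBs0 hBo hBJ hBf _.
have hAs : forall i, subalg (As i) by move=> i; case: (hAs0 i).
have hBs : forall i, subalg (Bs i) by move=> i; case: (hBs0 i).
have dis : forall n, forall i : 'I_n, (i < k)%N -> ~~ (k <= i)%N.
  by move=> n i; rewrite -ltnNge.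
have dis' : forall n, forall i : 'I_n, (k <= i)%N -> ~~ (i < k)%N.
  by move=> n i; rewrite -leqNgt.
have phiU : forall u, u \in (\sum_(i < q | (i < k)%N) As i)%VS ->
    phi u \in (\sum_(j < r | (j < k)%N) Bs j)%VS.
  by move=> u hu; rewrite -hphi_img memv_img.
split.
  move=> x y [u [a [j [b [j' [[hu ha] hj hb hj' ->]]]]]]
             [u' [a' [j2 [b' [j2' [[hu' ha'] hj2 hb' hj2' ->]]]]]].
  exists (nmul u u'), (nmul a a'),
    (nmul (u + a + j) (u' + a' + j2) - (nmul u u' + nmul a a')),
    (nmul b b'),
    (nmul (phi u + b + j') (phi u' + b' + j2') - (nmul (phi u) (phi u') + nmul b b')).
  split.
  - by split; [apply: (@sum_closed _ _ _ _ hAs hAo) | apply: (@sum_closed _ _ _ _ hAs hAo)].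
  - apply: Jpart => //.
      exact: (@sum_cross _ _ _ _ hAo _ _ _ _ (dis q) hu ha').
    exact: (@sum_cross _ _ _ _ hAo _ _ _ _ (dis' q) ha hu').
  - exact: (@sum_closed _ _ _ _ hBs hBo).
  - apply: Jpart => //.
      exact: (@sum_cross _ _ _ _ hBo _ _ _ _ (dis r) (phiU _ hu) hb').
    exact: (@sum_cross _ _ _ _ hBo _ _ _ _ (dis' r) hb (phiU _ hu')).
  - by rewrite hphi_mul // !addKsub.
move=> f; split.
  by move=> hPI e _; apply: hPI.
move=> hC e.
have liftA : forall x : A, exists z : prod_nalg A B, inC z /\ z.1 = x.
  move=> x; have : x \in fullv by apply: memvf.
  rewrite -hAf => /memv_addP [y hy [j hj ->]].
  move: hy; rewrite (@sum_split _ _ _ k) => /memv_addP [u hu [a ha ->]].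
  exists (u + a + j, phi u + 0 + 0); split => //.
  by exists u, a, j, 0, 0; split; rewrite ?mem0v.
have liftB : forall y : B, exists z : prod_nalg A B, inC z /\ z.2 = y.
  move=> x; have : x \in fullv by apply: memvf.
  rewrite -hBf => /memv_addP [y hy [j hj ->]].
  move: hy; rewrite (@sum_split _ _ _ k) => /memv_addP [w hw [b hb ->]].
  move: hw; rewrite -hphi_img => /memv_imgP [u hu ->].
  exists (u + 0 + 0, phi u + b + j); split => //.
  by exists u, 0, 0, b, j; split; rewrite ?mem0v.
have [eA heA] : exists eA : nat -> prod_nalg A B,
    forall i, inC (eA i) /\ (eA i).1 = (e i).1.
  exists (fun i => proj1_sig (constructive_indefinite_description _ (liftA (e i).1))).
  by move=> i; exact: proj2_sig (constructive_indefinite_description _ (liftA (e i).1)).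
have [eB heB] : exists eB : nat -> prod_nalg A B,
    forall i, inC (eB i) /\ (eB i).2 = (e i).2.
  exists (fun i => proj1_sig (constructive_indefinite_description _ (liftB (e i).2))).
  by move=> i; exact: proj2_sig (constructive_indefinite_description _ (liftB (e i).2)).
have hCA := hC eA (fun i => proj1 (heA i)).
have hCB := hC eB (fun i => proj1 (heB i)).
rewrite peval_pair in hCA; rewrite peval_pair in hCB.
have eqA : (fun i => (eA i).1) = (fun i => (e i).1).
  by apply: functional_extensionality => i; rewrite (proj2 (heA i)).
have eqB : (fun i => (eB i).2) = (fun i => (e i).2).
  by apply: functional_extensionality => i; rewrite (proj2 (heB i)).
have h1 := congr1 fst hCA; have h2 := congr1 snd hCB.
rewrite /= eqA in h1; rewrite /= eqB in h2.
by rewrite peval_pair h1 h2.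
Qed.
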